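(* Let $n\ge 3$ and let $k=n \bmod 4$. Under optimal play, the Sign Game on the cycle graph $C_n$ results in: a draw if $k=0$; a win for Player P if $k=1$; a win for Player 2 if $k=2$; a win for Player N if $k=3$.
   Context: The Sign Game on a finite simple undirected graph $G$: two players, Player P and Player N, alternate turns; the player who moves first is called Player 1 and the other Player 2 (either of P, N may be Player 1). On a turn, a player chooses a vertex of $G$ not yet assigned a value and assigns it $+1$ or $-1$. The game ends when every vertex has been assigned. The score of an edge $uv$ is the product of the values of $u$ and $v$, and the score $s(G)$ of the game is the sum of the scores of all edges. Player P wins if $s(G)>0$, Player N wins if $s(G)<0$, and the game is a draw if $s(G)=0$. ''Under optimal play'' means both players play optimally, each with primary goal of winning and secondary goal of at least drawing; the result is the outcome of this finite perfect-information game under such play, regardless of which of P, N moves first unless the result is stated in terms of Player 1/Player 2. The cycle graph $C_n$ ($n\ge 3$) has vertices $v_1,\dots,v_n$ and edges $v_iv_{i+1}$ for $1\le i\le n-1$ together with $v_nv_1$. *)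

(* Defs.v *)
From HB Require Import structures.
From mathcomp Require Import all_boot all_order all_algebra.
Set Implicit Arguments. Unset Strict Implicit. Unset Printing Implicit Defensive.
Import Order.TTheory GRing.Theory Num.Theory.
Local Open Scope ring_scope.

(* A (partial) position of the Sign Game on a vertex type T:
   [None] = unassigned, [Some true] = +1, [Some false] = -1. *)
Definition position (T : finType) := {ffun T -> option bool}.

Definition sval (b : bool) : int := if b then 1 else -1.
Definition vval (o : option bool) : int := if o is Some b then sval b else 0.

(* Each undirected edge {u,v} is
   counted once, via the pair (u,v) with enum_rank u < enum_rank v. *)
Definition simple_graph (T : finType) (e : rel T) : Prop :=
  irreflexive e /\ symmetric e.

Definition score (T : finType) (e : rel T) (f : position T) : int :=
  \sum_(p : T * T | e p.1 p.2 && (enum_rank p.1 < enum_rank p.2)%N)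
     vval (f p.1) * vval (f p.2).

Definition assign (T : finType) (f : position T) (v : T) (b : bool) : position T :=
  [ffun w => if w == v then Some b else f w].

(* Since outcomes are
   ordered loss < draw < win, maximizing/minimizing the sign of the final score
   is exactly "primary goal win, secondary goal draw". [fuel] bounds the number
   of remaining moves (the number of unassigned vertices suffices). *)
Fixpoint game_value (T : finType) (e : rel T) (fuel : nat) (Pturn : bool)
    (f : position T) : int :=
  if fuel is k.+1 then
    if [exists v, f v == None] then
      if Pturn then
        \big[Num.max/(-1)]_(v | f v == None)
          \big[Num.max/(-1)]_(b : bool) game_value e k false (assign f v b)
      else
        \big[Num.min/1]_(v | f v == None)
          \big[Num.min/1]_(b : bool) game_value e k true (assign f v b)
    else sgz (score e f)
  else sgz (score e f).

(* Result of the Sign Game under optimal play from the empty position: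
   1 = P wins, 0 = draw, -1 = N wins.  [P_first] = Player P is Player 1. *)
Definition sign_game_result (T : finType) (e : rel T) (P_first : bool) : int :=
  game_value e #|T| P_first [ffun _ => None].

Definition cycle_rel (n : nat) : rel 'I_n :=
  fun i j => (val j == (i.+1 %% n)%N) || (val i == (j.+1 %% n)%N).
Arguments cycle_rel n : clear implicits.

(* Main.v *)
Require Import Defs.
From HB Require Import structures.
From mathcomp Require Import all_boot all_order all_algebra zify.
Set Implicit Arguments. Unset Strict Implicit. Unset Printing Implicit Defensive.
Import Order.TTheory GRing.Theory Num.Theory.
Local Open Scope ring_scope.

Definition freev (T : finType) (f : position T) : {set T} := [set v | f v == None].

Lemma free_assign (T : finType) (f : position T) v b :
  f v = None -> #|freev (assign f v b)| = (#|freev f|).-1.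
Proof.
move=> fv.
have -> : freev (assign f v b) = freev f :\ v.
  by apply/setP=> w; rewrite !inE ffunE; case: (w =P v) => [->|]; rewrite ?fv ?andbT.
by rewrite (cardsD1 v (freev f)) inE fv eqxx.
Qed.

Lemma exists_free (T : finType) (f : position T) :
  [exists v, f v == None] = (0 < #|freev f|)%N.
Proof.
apply/existsP/card_gt0P => [[v hv]|[v hv]]; exists v; rewrite ?inE //.
by move: hv; rewrite inE.
Qed.

Lemma bigmax_ge (T : finType) (P : pred T) (F : T -> int) (c : int) j :
  P j -> c <= F j -> c <= \big[Num.max/(-1)]_(i | P i) F i.
Proof.
move=> Pj cF; have : j \in index_enum T by rewrite mem_index_enum.
elim: (index_enum T) => [//|i r IH]; rewrite inE big_cons => /orP[/eqP<-|jr].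
  by rewrite Pj /= (le_max c) cF.
by case: (P i); rewrite ?(le_max c) IH ?orbT.
Qed.

Lemma bigmin_le (T : finType) (P : pred T) (F : T -> int) (c : int) j :
  P j -> F j <= c -> \big[Num.min/1]_(i | P i) F i <= c.
Proof.
move=> Pj cF; have : j \in index_enum T by rewrite mem_index_enum.
elim: (index_enum T) => [//|i r IH]; rewrite inE big_cons => /orP[/eqP<-|jr].
  by rewrite Pj /= (ge_min c) cF.
by case: (P i); rewrite ?(ge_min c) IH ?orbT.
Qed.

Lemma bigmin_ge (T : finType) (P : pred T) (F : T -> int) (c : int) :
  c <= 1 -> (forall i, P i -> c <= F i) -> c <= \big[Num.min/1]_(i | P i) F i.
Proof.
move=> c1 H; apply: (big_ind (fun x => c <= x)) => // x y hx hy.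
by rewrite (le_min c) hx hy.
Qed.

Lemma bigmax_le (T : finType) (P : pred T) (F : T -> int) (c : int) :
  -1 <= c -> (forall i, P i -> F i <= c) -> \big[Num.max/(-1)]_(i | P i) F i <= c.
Proof.
move=> c1 H; apply: (big_ind (fun x => x <= c)) => // x y hx hy.
by rewrite (ge_max c) hx hy.
Qed.

Section Strat.
Variables (T : finType) (e : rel T).

Lemma strat_P (InvO InvX : position T -> Prop) (c : int) :
  c <= 1 ->
  (forall f, InvO f -> #|freev f| = 0%N -> c <= sgz (score e f)) ->
  (forall f v b, InvO f -> f v = None -> InvX (assign f v b)) ->
  (forall g, InvX g -> #|freev g| = 0%N -> c <= sgz (score e g)) ->
  (forall g, InvX g -> (0 < #|freev g|)%N ->
      exists w b, g w = None /\ InvO (assign g w b)) ->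
  forall k f, (#|freev f| <= k)%N ->
    (InvO f -> c <= game_value e k false f) /\
    (InvX f -> c <= game_value e k true f).
Proof.
move=> c1 HO HOX HX HXO; elim=> [|k IH] f hk.
  have f0 : #|freev f| = 0%N by apply/eqP; rewrite -leqn0.
  by split=> H /=; [apply: HO|apply: HX].
rewrite /= exists_free; case: posnP => [f0|fpos].
  by split=> H; [apply: HO|apply: HX].
split=> H.
  apply: bigmin_ge => // v /eqP fv; apply: bigmin_ge => // b _.
  apply: (proj2 (IH _ _)); last exact: HOX.
  by rewrite free_assign // -ltnS prednK.
have [w [b [gw Hw]]] := HXO _ H fpos.
apply: (bigmax_ge (j := w)); first by apply/eqP.
apply: (bigmax_ge (j := b)) => //.
apply: (proj1 (IH _ _)) => //.
by rewrite free_assign // -ltnS prednK.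
Qed.

Lemma strat_N (InvO InvX : position T -> Prop) (c : int) :
  -1 <= c ->
  (forall f, InvO f -> #|freev f| = 0%N -> sgz (score e f) <= c) ->
  (forall f v b, InvO f -> f v = None -> InvX (assign f v b)) ->
  (forall g, InvX g -> #|freev g| = 0%N -> sgz (score e g) <= c) ->
  (forall g, InvX g -> (0 < #|freev g|)%N ->
      exists w b, g w = None /\ InvO (assign g w b)) ->
  forall k f, (#|freev f| <= k)%N ->
    (InvO f -> game_value e k true f <= c) /\
    (InvX f -> game_value e k false f <= c).
Proof.
move=> c1 HO HOX HX HXO; elim=> [|k IH] f hk.
  have f0 : #|freev f| = 0%N by apply/eqP; rewrite -leqn0.
  by split=> H /=; [apply: HO|apply: HX].
rewrite /= exists_free; case: posnP => [f0|fpos].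
  by split=> H; [apply: HO|apply: HX].
split=> H.
  apply: bigmax_le => // v /eqP fv; apply: bigmax_le => // b _.
  apply: (proj2 (IH _ _)); last exact: HOX.
  by rewrite free_assign // -ltnS prednK.
have [w [b [gw Hw]]] := HXO _ H fpos.
apply: (bigmin_le (j := w)); first by apply/eqP.
apply: (bigmin_le (j := b)) => //.
apply: (proj1 (IH _ _)) => //.
by rewrite free_assign // -ltnS prednK.
Qed.

Lemma gv_bounds k (P : bool) (f : position T) :
  -1 <= game_value e k P f <= 1.
Proof.
have sg f' : -1 <= sgz (score e f') <= 1.
  by case: sgzP.
have mx (x y : int) : -1 <= x -> -1 <= Num.max x y.
  by move=> hx; rewrite (le_max (-1) x y) hx.
have mn (x y : int) : x <= 1 -> Num.min x y <= 1.
  by move=> hx; rewrite (ge_min 1 x y) hx.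
elim: k P f => [|k IH] P f /=; first exact: sg.
case: ifP => _; last exact: sg.
case: P.
  apply/andP; split.
    apply: (big_ind (fun x => -1 <= x)) => //; first by move=> x y hx _; apply: mx.
    move=> v _; apply: (big_ind (fun x => -1 <= x)) => //; first by move=> x y hx _; apply: mx.
    by move=> b _; case/andP: (IH false (assign f v b)).
  apply: bigmax_le => // v _; apply: bigmax_le => // b _; by case/andP: (IH false (assign f v b)).
apply/andP; split.
  apply: bigmin_ge => // v _; apply: bigmin_ge => // b _; by case/andP: (IH true (assign f v b)).
apply: (big_ind (fun x => x <= 1)) => //; first by move=> x y hx _; apply: mn.
move=> v _; apply: (big_ind (fun x => x <= 1)) => //; first by move=> x y hx _; apply: mn.
by move=> b _; case/andP: (IH true (assign f v b)).
Qed.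
End Strat.

Section Cyc.
Variable n : nat.
Hypothesis hn : (2 < n)%N.

Lemma valS (i : 'I_n) : val (ordS i) = (if i.+1 == n then 0 else i.+1)%N.
Proof.
rewrite /=; have := ltn_ord i; rewrite leq_eqVlt => /orP[/eqP->|lt].
  by rewrite modnn eqxx.
by rewrite modn_small // (ltn_eqF lt).
Qed.

Lemma ordS_neq (i : 'I_n) : ordS i != i.
Proof.
apply/eqP => /(congr1 val); rewrite valS.
have := ltn_ord i; case: eqP => /=; lia.
Qed.

Lemma ordS_pred_neq (i : 'I_n) : ordS i != ord_pred i.
Proof.
apply/eqP => /(congr1 (@ordS n)); rewrite ord_predK => /(congr1 val).
rewrite valS (valS i); have := ltn_ord i.
case E: (i.+1 == n); move/eqP: E => E /=; case: ifP => /eqP; lia.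
Qed.

Definition good (c : bool) (f : position 'I_n) (i : 'I_n) : bool :=
  if (f i, f (ordS i)) is (Some a, Some b) then (a == b) == c else false.

Definition G c (f : position 'I_n) : nat := (\sum_(i < n) good c f i)%N.

Lemma good_assign c (f : position 'I_n) (w : 'I_n) (b : bool) (i : 'I_n) :
  f w = None -> good c f i -> good c (assign f w b) i.
Proof.
move=> fw; rewrite /good /assign !ffunE.
have [e|_] := eqVneq i w; first by rewrite e fw.
have [e|_] := eqVneq (ordS i) w; first by rewrite e fw; case: (f i).
by [].
Qed.

Lemma G_mono c (f : position 'I_n) (w : 'I_n) (b : bool) : f w = None -> (G c f <= G c (assign f w b))%N.
Proof.
move=> fw; apply: leq_sum => i _.
by case: (good c f i) (@good_assign c f w b i fw) => // ->.
Qed.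

Definition cp (c bx : bool) := if c then bx else ~~ bx.

Lemma G_incr c (f : position 'I_n) (w x : 'I_n) bx :
  f w = None -> f x = Some bx -> (x = ordS w \/ w = ordS x) ->
  (G c f < G c (assign f w (cp c bx)))%N.
Proof.
move=> fw fx hx.
have wx : w != x by apply/eqP => wx; rewrite wx fx in fw.
have [i0 [g0 g1]] : exists i0, good c f i0 = false /\ good c (assign f w (cp c bx)) i0.
  have xw : x != w by rewrite eq_sym.
  case: hx => e.
    exists w; rewrite /good /assign !ffunE fw eqxx -e; split=> //.
    rewrite (negbTE xw) fx.
    by rewrite /cp; case: c; case: (bx).
  exists x; rewrite /good /assign !ffunE -e fw; split; first by case: (f x).
  rewrite eqxx (negbTE xw) fx /cp.
  by case: c; case: (bx).
rewrite /G (bigD1 i0) // (bigD1 i0 (P := xpredT)) //= g0 g1 add0n add1n ltnS.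
apply: leq_sum => i _.
by case: (good c f i) (@good_assign c f w (cp c bx) i fw) => // ->.
Qed.

Definition Inv c k (f : position 'I_n) : Prop :=
  exists S : {set 'I_n},
    (forall i, i \in S -> [/\ f i = None, f (ordS i) = None & ordS i \notin S]) /\
    (k <= G c f + #|S|)%N.

Lemma step c k (g : position 'I_n) (S : {set 'I_n}) (w x : 'I_n) bx :
  (forall i, i \in S -> ordS i \notin S) ->
  (forall i, i \in S -> i != w -> ordS i != w -> g i = None /\ g (ordS i) = None) ->
  g w = None -> g x = Some bx -> (x = ordS w \/ w = ordS x) ->
  (k <= G c g + #|S|)%N ->
  Inv c k (assign g w (cp c bx)).
Proof.
move=> disj hv gw gx hx hk.
have hG := G_incr c gw gx hx.
exists (if w \in S then S :\ w else S :\ ord_pred w); split.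
  move=> i; case: ifP => wS; rewrite !inE => /andP[ne iS].
    have nw : ordS i != w.
      by apply/eqP => e; move: (disj _ iS); rewrite e wS.
    have [g1 g2] := hv _ iS ne nw.
    rewrite !ffunE (negbTE ne) (negbTE nw); split => //.
    by rewrite (negbTE (disj _ iS)) andbF.
  have ne' : i != w by apply/eqP => e; move: iS; rewrite e wS.
  have nw : ordS i != w.
    by apply/eqP => e; move: ne; rewrite -e ordSK eqxx.
  have [g1 g2] := hv _ iS ne' nw.
  rewrite !ffunE (negbTE ne') (negbTE nw); split => //.
  by rewrite (negbTE (disj _ iS)) andbF.
have hS : (#|S| <= #|(if w \in S then S :\ w else S :\ ord_pred w)| + 1)%N.
  by case: ifP => _; [rewrite (cardsD1 w S) | rewrite (cardsD1 (ord_pred w) S)]; case: (_ \in S); rewrite addnC leq_add2l.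
lia.
Qed.

Lemma iter_val (a : 'I_n) m : val (iter m (@ordS n) a) = ((a + m) %% n)%N.
Proof.
elim: m => [|m IH]; first by rewrite addn0 modn_small.
rewrite iterS /= IH -[((a + m) %% n).+1]addn1 modnDml addn1 addnS.
by [].
Qed.

Lemma reach (a b : 'I_n) : exists m, iter m (@ordS n) a = b.
Proof.
exists (b + (n - a))%N; apply/val_inj; rewrite iter_val addnCA.
by rewrite (subnKC (ltnW (ltn_ord a))) modnDr modn_small.
Qed.

Lemma free_nbr (g : position 'I_n) (w0 u : 'I_n) :
  g w0 = None -> g u != None -> exists w bx, g w = None /\ g (ordS w) = Some bx.
Proof.
move=> gw0 gu.
have ex : exists m, g (iter m (@ordS n) w0) != None.
  by have [m hm] := reach w0 u; exists m; rewrite hm.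
case: (ex_minnP ex) => m hm hmin.
case: m hm hmin => [|m] hm hmin; first by rewrite /= gw0 in hm.
exists (iter m (@ordS n) w0).
move: hm; rewrite iterS; case E: (g (ordS (iter m (@ordS n) w0))) => [bx|] // _.
exists bx; split => //.
case E2: (g (iter m (@ordS n) w0)) => [b'|] //.
have := hmin m; rewrite E2 ltnn => /(_ isT) //.
Qed.

Lemma init c k m (f : position 'I_n) :
  (m <= n)%N -> (forall i : 'I_n, (i < m)%N -> f i = None) -> (k <= m./2)%N ->
  Inv c k f.
Proof.
move=> mn hf hk.
have i0 : 'I_n by exists 0%N; lia.
pose h (j : 'I_(m./2)) : 'I_n := insubd i0 j.*2.
have hv (j : 'I_(m./2)) : val (h j) = j.*2.
  by rewrite /h val_insubd; have := ltn_ord j; case: ifP => //; lia.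
exists [set h j | j : 'I_(m./2)]; split.
  move=> i /imsetP[j _ ->].
  have lj := ltn_ord j.
  have vs : val (ordS (h j)) = (j.*2).+1.
    by rewrite valS hv; case: eqP => //; lia.
  split.
  - by apply: hf; rewrite hv; lia.
  - by apply: hf; rewrite vs; lia.
  - apply/imsetP => [[j' _ /(congr1 val)]]; rewrite vs hv; lia.
rewrite card_imset ?card_ord; first lia.
move=> j j' /(congr1 val); rewrite !hv => e; apply/val_inj => /=; lia.
Qed.

Lemma Lv_lt : (n.-1 < n)%N. Proof. lia. Qed.
Definition Lv : 'I_n := Ordinal Lv_lt.
Definition empty : position 'I_n := [ffun=> None].

Definition InvX c k (g : position 'I_n) : Prop :=
  (exists f u b, Inv c k f /\ f u = None /\ g = assign f u b) \/
  (g = empty /\ (k <= (n.-1)./2)%N).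

Lemma Inv_free c k f : Inv c k f ->
  (forall i, f i = None -> forall j, f j = None -> i = j) -> (k <= G c f)%N.
Proof.
move=> [S [hS hk]] uniq.
have S0 : #|S| = 0%N.
  apply: eq_card0 => i; apply/negP => iS.
  have [h1 h2 _] := hS i iS.
  by move: (ordS_neq i); rewrite (uniq _ h2 _ h1) eqxx.
by rewrite S0 addn0 in hk.
Qed.

Lemma free0 (g : position 'I_n) (v : 'I_n) : #|freev g| = 0%N -> g v <> None.
Proof.
move=> /eqP; rewrite cards_eq0 => /eqP e gv.
have : v \in freev g by rewrite inE gv.
by rewrite e inE.
Qed.

Lemma HO c k f : Inv c k f -> #|freev f| = 0%N -> (k <= G c f)%N.
Proof. by move=> hI h0; apply: (Inv_free hI) => i hi; case: (free0 h0 hi). Qed.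

Lemma HX c k g : InvX c k g -> #|freev g| = 0%N -> (k <= G c g)%N.
Proof.
case=> [[f [u [b [hI [fu ->]]]]]|[-> _]] h0; last first.
  by case: (free0 h0 (v := Lv)); rewrite ffunE.
have one v : f v = None -> v = u.
  move=> fv; apply/eqP; apply/negPn/negP => vu.
  by apply: (free0 h0 (v := v)); rewrite ffunE (negbTE vu).
apply: leq_trans (G_mono _ _ fu).
by apply: (Inv_free hI) => i /one -> j /one ->.
Qed.

Lemma HXO c k g : InvX c k g -> (0 < #|freev g|)%N ->
  exists w b, g w = None /\ Inv c k (assign g w b).
Proof.
case=> [[f [u [b [[S [hS hk]] [fu ->]]]]]|[-> hk]] hpos; last first.
  exists Lv, true; split; first by rewrite ffunE.
  apply: (@init c k n.-1) => //; first lia.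
  move=> i hi; rewrite !ffunE; case: eqP => // e.
  by move: hi; rewrite e /=; lia.
have hk' : (k <= G c (assign f u b) + #|S|)%N.
  by apply: leq_trans hk _; rewrite leq_add2r; apply: G_mono.
have disj i : i \in S -> ordS i \notin S by case/hS.
have gu : assign f u b u = Some b by rewrite ffunE eqxx.
case uS: (u \in S).
  have [_ fSu _] := hS u uS.
  exists (ordS u), (cp c b); split.
    by rewrite ffunE (negbTE (ordS_neq u)).
  apply: (step (S := S) (x := u)) => //.
  - move=> i iS ne nw; have [h1 h2 h3] := hS i iS.
    have iu : i != u by apply/eqP => e; move: nw; rewrite e eqxx.
    have Siu : ordS i != u by apply/eqP => e; move: h3; rewrite e uS.
    by rewrite !ffunE (negbTE iu) (negbTE Siu).
  - by rewrite ffunE (negbTE (ordS_neq u)).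
  - by right.
case pS: (ord_pred u \in S).
  have [fpu _ _] := hS _ pS.
  have pu : ord_pred u != u.
    by apply/eqP => e; move: (ordS_neq (ord_pred u)); rewrite ord_predK e eqxx.
  exists (ord_pred u), (cp c b); split.
    by rewrite ffunE (negbTE pu).
  apply: (step (S := S) (x := u)) => //.
  - move=> i iS ne nw; have [h1 h2 h3] := hS i iS.
    have iu : i != u by apply/eqP => e; move: iS; rewrite e uS.
    have Siu : ordS i != u.
      by apply/eqP => e; move: ne; rewrite -e ordSK eqxx.
    by rewrite !ffunE (negbTE iu) (negbTE Siu).
  - by rewrite ffunE (negbTE pu).
  - by left; rewrite ord_predK.
have [w0 hw0] : exists w0, assign f u b w0 = None.
  by case/card_gt0P: hpos => w0; rewrite inE => /eqP; exists w0.
have gun : assign f u b u != None by rewrite gu.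
have [w [bx [gw gSw]]] := free_nbr hw0 gun.
exists w, (cp c bx); split => //.
apply: (step (S := S) (x := ordS w)) => //.
- move=> i iS _ _; have [h1 h2 h3] := hS i iS.
  have iu : i != u by apply/eqP => e; move: iS; rewrite e uS.
  have Siu : ordS i != u.
    apply/eqP => e; have ei : i = ord_pred u by rewrite -e ordSK.
    by move: iS; rewrite ei pS.
  by rewrite !ffunE (negbTE iu) (negbTE Siu).
- by left.
Qed.
End Cyc.

Section Score.
Variable n : nat.
Hypothesis hn : (2 < n)%N.

Definition xv (f : position 'I_n) i := vval (f i).
Definition cyc (f : position 'I_n) : int := \sum_(i < n) xv f i * xv f (ordS i).

Lemma cycle_relE (a b : 'I_n) : cycle_rel n a b = (b == ordS a) || (b == ord_pred a).
Proof.
rewrite /cycle_rel; congr (_ || _).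
apply/eqP/eqP => [e|->]; last exact: (esym (congr1 val (ord_predK a))).
have -> : a = ordS b by apply/val_inj.
by rewrite ordSK.
Qed.

Lemma score_cyc f : score (cycle_rel n) f = cyc f.
Proof.
set F := fun p : 'I_n * 'I_n => xv f p.1 * xv f p.2.
have sym a b : cycle_rel n a b = cycle_rel n b a by rewrite /cycle_rel orbC.
have irr a : cycle_rel n a a = false.
  rewrite cycle_relE; apply/negbTE; rewrite negb_or; apply/andP; split.
    by rewrite eq_sym ordS_neq.
  by apply/eqP => e; move: (ordS_neq hn a); rewrite {1}e ord_predK eqxx.
set A := \sum_(p | cycle_rel n p.1 p.2) F p.
have A1 : A = score (cycle_rel n) f + score (cycle_rel n) f.
  rewrite /A (bigID (fun p : 'I_n * 'I_n => (enum_rank p.1 < enum_rank p.2)%N)) /=.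
  congr (_ + _).
  rewrite (reindex_inj (h := fun p : 'I_n * 'I_n => (p.2, p.1))); last first.
    by move=> [a b] [c d] /= [-> ->].
  apply: eq_big => [[a b]|[a b] _] /=; last by rewrite /F /= mulrC.
  rewrite sym; case E: (cycle_rel n a b) => //=.
  have ab : a != b by apply/eqP => e; rewrite e irr in E.
  have rab : enum_rank a != enum_rank b by apply: contra ab => /eqP /enum_rank_inj ->.
  by rewrite -leqNgt leq_eqVlt val_eqE (negbTE rab).
have A2 : A = cyc f + cyc f.
  rewrite /A -(pair_big_dep xpredT (fun a b => cycle_rel n a b)
     (fun a b => xv f a * xv f b)) /=.
  have inner a : \sum_(b | cycle_rel n a b) xv f a * xv f b =
                 xv f a * xv f (ordS a) + xv f a * xv f (ord_pred a).
    rewrite (bigD1 (ordS a)) /=; last by rewrite cycle_relE eqxx.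
    congr (_ + _); apply: big_pred1 => b /=.
    rewrite cycle_relE; case: (b =P ordS a) => [->|_] /=.
      by rewrite (negbTE (ordS_pred_neq hn a)).
    by rewrite andbT.
  rewrite (eq_bigr _ (fun a _ => inner a)) big_split /=.
  congr (_ + _).
  rewrite (reindex_inj (@ordS_inj n)) /cyc; apply: eq_bigr => a _.
  by rewrite ordSK mulrC.
have : score (cycle_rel n) f + score (cycle_rel n) f = cyc f + cyc f by rewrite -A1 -A2.
lia.
Qed.

Definition Dn (f : position 'I_n) : nat := \sum_(i < n) (f i != f (ordS i)).

Lemma full_val (f : position 'I_n) i : f i != None ->
  xv f i = 1 \/ xv f i = -1.
Proof. by rewrite /xv; case: (f i) => [[]|]; auto. Qed.

Lemma term_eq (f : position 'I_n) i : (forall j, f j != None) ->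
  xv f i * xv f (ordS i) = 1 - 2 * (f i != f (ordS i))%:R.
Proof.
move=> hf; move: (hf i) (hf (ordS i)); rewrite /xv.
by case: (f i) => [[]|] //; case: (f (ordS i)) => [[]|].
Qed.

Lemma cyc_full (f : position 'I_n) : (forall j, f j != None) ->
  cyc f = n%:R - 2 * (Dn f)%:R.
Proof.
move=> hf; rewrite /cyc (eq_bigr _ (fun i _ => term_eq i hf)).
rewrite sumrB sumr_const card_ord /Dn natr_sum mulr_sumr.
by [].
Qed.

Lemma Dn_even (f : position 'I_n) : (forall j, f j != None) -> ~~ odd (Dn f).
Proof.
move=> hf.
have h1 : \prod_(i < n) (xv f i * xv f (ordS i)) = 1.
  have e : \prod_(i < n) xv f (ordS i) = \prod_(i < n) xv f i.
    by rewrite [RHS](reindex_inj (@ordS_inj n)).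
  rewrite big_split /= e -big_split /=; apply: big1 => i _.
  by case: (full_val (hf i)) => ->.
have h2 : \prod_(i < n) (xv f i * xv f (ordS i)) = (-1) ^+ Dn f.
  rewrite /Dn -prodrXr; apply: eq_bigr => i _.
  move: (hf i) (hf (ordS i)); rewrite /xv.
  by case: (f i) => [[]|] //; case: (f (ordS i)) => [[]|].
move: h1; rewrite h2 -signr_odd; case: (odd _) => //.
Qed.

Lemma G_full (f : position 'I_n) : (forall j, f j != None) ->
  (G true f + Dn f = n)%N /\ G false f = Dn f.
Proof.
move=> hf.
have gt i : good true f i = (f i == f (ordS i)).
  move: (hf i) (hf (ordS i)); rewrite /good.
  by case: (f i) => [[]|] //; case: (f (ordS i)) => [[]|].
have gf i : good false f i = (f i != f (ordS i)).
  move: (hf i) (hf (ordS i)); rewrite /good.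
  by case: (f i) => [[]|] //; case: (f (ordS i)) => [[]|].
split; last by apply: eq_bigr => i _; rewrite gf.
rewrite /G /Dn -big_split /=.
rewrite (eq_bigr (fun _ => 1%N)); first by rewrite sum1_card card_ord.
by move=> i _; rewrite gt; case: (_ == _).
Qed.
End Score.

Section Main.
Variable n : nat.
Hypothesis hn : (2 < n)%N.

Lemma fin_info (f : position 'I_n) : #|freev f| = 0%N ->
  exists D, [/\ ~~ odd D, score (cycle_rel n) f = n%:R - 2 * D%:R,
               (G true f + D = n)%N & G false f = D].
Proof.
move=> h0.
have hf : forall j, f j != None by move=> j; apply/eqP; apply: free0 h0.
exists (Dn f); have [g1 g2] := G_full hf.
by split => //; [apply: Dn_even | rewrite score_cyc // cyc_full].
Qed.

Let E : position 'I_n := [ffun _ => None].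

Lemma freeE : (#|freev E| <= n)%N.
Proof. by apply: leq_trans (max_card _) _; rewrite card_ord. Qed.

Lemma P_wrap (c : int) (k : nat) (Pf : bool) :
  c <= 1 ->
  (if Pf then (k <= (n.-1)./2)%N else (k <= n./2)%N) ->
  (forall D : nat, ~~ odd D -> (k + D <= n)%N -> c <= sgz (n%:R - 2 * D%:R : int)) ->
  c <= game_value (cycle_rel n) n Pf E.
Proof.
move=> c1 hk H.
have Hfin f : #|freev f| = 0%N -> (k <= G true f)%N -> c <= sgz (score (cycle_rel n) f).
  move=> h0 hG; have [D [hD -> g1 _]] := fin_info h0.
  apply: H => //; lia.
have := @strat_P _ (cycle_rel n) (@Inv n true k) (@InvX n true k) c c1 _ _ _ _ n E freeE.
case=> //.
- by move=> f hI h0; apply: Hfin h0 (HO hn hI h0).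
- by move=> f v b hI fv; left; exists f, v, b.
- by move=> g hI h0; apply: Hfin h0 (HX hn hI h0).
- by move=> g hI hp; apply: (HXO hn hI hp).
move=> h1 h2; case: Pf hk => hk.
  by apply: h2; right; split.
apply: h1; apply: (@init n hn true k n) => //; by move=> i; rewrite ffunE.
Qed.

Lemma N_wrap (c : int) (k : nat) (Pf : bool) :
  -1 <= c ->
  (if Pf then (k <= n./2)%N else (k <= (n.-1)./2)%N) ->
  (forall D : nat, ~~ odd D -> (k <= D)%N -> (D <= n)%N -> sgz (n%:R - 2 * D%:R : int) <= c) ->
  game_value (cycle_rel n) n Pf E <= c.
Proof.
move=> c1 hk H.
have Hfin f : #|freev f| = 0%N -> (k <= G false f)%N -> sgz (score (cycle_rel n) f) <= c.
  move=> h0 hG; have [D [hD -> g1 g2]] := fin_info h0.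
  apply: H => //; lia.
have := @strat_N _ (cycle_rel n) (@Inv n false k) (@InvX n false k) c c1 _ _ _ _ n E freeE.
case=> //.
- by move=> f hI h0; apply: Hfin h0 (HO hn hI h0).
- by move=> f v b hI fv; left; exists f, v, b.
- by move=> g hI h0; apply: Hfin h0 (HX hn hI h0).
- by move=> g hI hp; apply: (HXO hn hI hp).
move=> h1 h2; case: Pf hk => hk.
  apply: h1; apply: (@init n hn false k n) => //; by move=> i; rewrite ffunE.
by apply: h2; right; split.
Qed.
End Main.

Lemma sg1 (s : int) : 0 < s -> 1 <= sgz s. Proof. by move=> h; rewrite gtr0_sgz. Qed.
Lemma sg0 (s : int) : 0 <= s -> 0 <= sgz s. Proof. by rewrite sgz_ge0. Qed.
Lemma sgm (s : int) : s < 0 -> sgz s <= -1. Proof. by move=> h; rewrite ltr0_sgz. Qed.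
Lemma sgn0 (s : int) : s <= 0 -> sgz s <= 0. Proof. by rewrite sgz_le0. Qed.

Lemma evenD (D : nat) : ~~ odd D -> D = (D./2).*2.
Proof. by move=> h; have := odd_double_half D; rewrite (negbTE h) add0n. Qed.

Theorem theorem6 (n : nat) (hn : (3 <= n)%N) :
  forall P_first : bool,
    let r := sign_game_result (cycle_rel n) P_first in
    [/\ (n %% 4 = 0)%N -> r = 0,
        (n %% 4 = 1)%N -> r = 1,
        (n %% 4 = 2)%N -> r = (if P_first then -1 else 1) &
        (n %% 4 = 3)%N -> r = -1].
Proof.
move=> Pf r; rewrite /r; clear r; rewrite /sign_game_result card_ord.
have [lo hi] := andP (gv_bounds (cycle_rel n) n Pf [ffun _ => None]).
have hq := divn_eq n 4.
split=> hm; apply/eqP; rewrite eq_le; apply/andP; split.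
- apply: (@N_wrap n hn 0 (if Pf then n./2 else (n.-1)./2)) => //; first by case: (Pf).
  move=> D hD h1 h2; have := evenD hD; move=> hDe; apply: sgn0; try (case: (Pf) h1 => h1); lia.
- apply: (@P_wrap n hn 0 (if Pf then (n.-1)./2 else n./2)) => //; first by case: (Pf).
  move=> D hD h1; have := evenD hD; move=> hDe; apply: sg0; try (case: (Pf) h1 => h1); lia.
- by [].
- apply: (@P_wrap n hn 1 (if Pf then (n.-1)./2 else n./2)) => //; first by case: (Pf).
  move=> D hD h1; have := evenD hD; move=> hDe; apply: sg1; try (case: (Pf) h1 => h1); lia.
- case: Pf lo hi => lo hi //.
  apply: (@N_wrap n hn (-1) (n./2) true) => //.
  move=> D hD h1 h2; have := evenD hD; move=> hDe; apply: sgm; try (case: (Pf) h1 => h1); lia.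
- case: Pf lo hi => lo hi //.
  apply: (@P_wrap n hn 1 (n./2) false) => //.
  move=> D hD h1; have := evenD hD; move=> hDe; apply: sg1; try (case: (Pf) h1 => h1); lia.
- apply: (@N_wrap n hn (-1) (if Pf then n./2 else (n.-1)./2)) => //; first by case: (Pf).
  move=> D hD h1 h2; have := evenD hD; move=> hDe; apply: sgm; try (case: (Pf) h1 => h1); lia.
- by [].
Qed.
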